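(* Let $q\ge5$ be odd. The $\mathrm{Un}\Gamma$-lines (lines meeting the twisted cubic $\mathcal{C}$ in exactly one point and contained in no osculating plane) form two orbits under $G_q$, each of size $(q^3-q)/2$, namely $\{\ell_j\varphi:\varphi\in G_q\}$, $j=1,2$, where $P_0=P(0,0,0,1)$, $\ell_1$ is the line through $P_0$ and $P(1,0,1,0)$, $\ell_2$ is the line through $P_0$ and $P(1,0,\rho,0)$, and $\rho$ is a non-square in $\mathbb{F}_q$. Moreover, $\ell_1$ and $\ell_2$ are fixed by the same subgroup of $G_q$, of size $2$, each element of which has a matrix of the form $\begin{pmatrix}1&0&0&0\\0&d&0&0\\0&0&d^2&0\\0&0&0&d^3\end{pmatrix}$, $d\in\{1,-1\}$.
   Context: $\mathrm{PG}(3,q)$ has points $P(x_0,x_1,x_2,x_3)$; $\boldsymbol{\pi}(c_0,c_1,c_2,c_3)$ is the plane $c_0x_0+c_1x_1+c_2x_2+c_3x_3=0$. The twisted cubic is $\mathcal{C}=\{P(t^3,t^2,t,1):t\in\mathbb{F}_q\}\cup\{P(1,0,0,0)\}$; the osculating planes are $\boldsymbol{\pi}(1,-3t,3t^2,-t^3)$, $t\in\mathbb{F}_q$, and $\boldsymbol{\pi}(0,0,0,1)$. $G_q$ is the group of projectivities mapping $\mathcal{C}$ to itself; for $q\ge5$ its elements are $x\mapsto xM$ on row coordinate vectors, $M=\begin{pmatrix} a^3&a^2c&ac^2&c^3\\ 3a^2b&a^2d+2abc&bc^2+2acd&3c^2d\\ 3ab^2&b^2c+2abd&ad^2+2bcd&3cd^2\\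 b^3&b^2d&bd^2&d^3\end{pmatrix}$, $ad-bc\ne0$, up to scalar. *)

(* Defs.v *)
From HB Require Import structures.
From mathcomp Require Import all_boot all_order all_algebra.
Set Implicit Arguments. Unset Strict Implicit. Unset Printing Implicit Defensive.
Import GRing.Theory.
Local Open Scope ring_scope.

(* A subspace of F^4 (row vectors) is represented canonically by the square
   matrix <<A>>%MS (mathcomp's canonical generator of the row space of A).
   Points = canonical subspaces of rank 1, lines = canonical subspaces of rank 2. *)
Section TwistedCubic.
Variable F : finFieldType.

Definition rowv4 (x0 x1 x2 x3 : F) : 'rV[F]_4 :=
  \row_(j < 4) nth 0 [:: x0; x1; x2; x3] j.

Definition ppoint (x0 x1 x2 x3 : F) : 'M[F]_4 := <<rowv4 x0 x1 x2 x3>>%MS.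

Definition line_through (u v : 'rV[F]_4) : 'M[F]_4 := <<col_mx u v>>%MS.

Definition is_line (L : 'M[F]_4) : bool := (\rank L == 2)%N && (<<L>>%MS == L).

Definition cubic_pts : {set 'M[F]_4} :=
  [set ppoint (t ^+ 3) (t ^+ 2) t 1 | t : F] :|: [set ppoint 1 0 0 0].

Definition in_plane (L : 'M[F]_4) (c : 'rV[F]_4) : bool := L *m c^T == 0.

Definition osc (t : F) : 'rV[F]_4 := rowv4 1 (- (3%:R * t)) (3%:R * t ^+ 2) (- t ^+ 3).
Definition osc_inf : 'rV[F]_4 := rowv4 0 0 0 1.

Definition UnGamma : {set 'M[F]_4} :=
  [set L | [&& is_line L,
              #|[set P in cubic_pts | (P <= L)%MS]| == 1%N,
              [forall t : F, ~~ in_plane L (osc t)] &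
              ~~ in_plane L osc_inf]].

Definition Mq (a b c d : F) : 'M[F]_4 :=
  \matrix_(i < 4, j < 4) nth 0 (nth [::]
    [:: [:: a ^+ 3; a ^+ 2 * c; a * c ^+ 2; c ^+ 3];
        [:: 3%:R * a ^+ 2 * b; a ^+ 2 * d + 2%:R * a * b * c;
            b * c ^+ 2 + 2%:R * a * c * d; 3%:R * c ^+ 2 * d];
        [:: 3%:R * a * b ^+ 2; b ^+ 2 * c + 2%:R * a * b * d;
            a * d ^+ 2 + 2%:R * b * c * d; 3%:R * c * d ^+ 2];
        [:: b ^+ 3; b ^+ 2 * d; b * d ^+ 2; d ^+ 3]] i) j.

(* the projectivity x |-> x M, as its (faithful) action on subspaces of F^4;
   two invertible matrices induce the same map iff they are proportional, so
   this identifies projectivities with matrices up to scalars *)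
Definition proj_of (M : 'M[F]_4) : {ffun 'M[F]_4 -> 'M[F]_4} :=
  [ffun X : 'M[F]_4 => <<X *m M>>%MS].

Definition Gq : {set {ffun 'M[F]_4 -> 'M[F]_4}} :=
  [set f | [exists a : F, exists b : F, exists c : F, exists d : F,
              (a * d - b * c != 0) && (f == proj_of (Mq a b c d))]].

Definition Gorbit (L : 'M[F]_4) : {set 'M[F]_4} := [set (phi : {ffun 'M[F]_4 -> 'M[F]_4}) L | phi in Gq].

Definition Gstab (L : 'M[F]_4) : {set {ffun 'M[F]_4 -> 'M[F]_4}} :=
  [set phi in Gq | phi L == L].

Definition diagd (d : F) : 'M[F]_4 :=
  \matrix_(i < 4, j < 4) (if i == j then d ^+ i else 0).

End TwistedCubic.

(* Main.v *)
Require Import Defs.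
From HB Require Import structures.
From mathcomp Require Import all_boot all_order all_algebra.
From mathcomp Require Import all_field.
From mathcomp Require Import ring zify.
Set Implicit Arguments. Unset Strict Implicit. Unset Printing Implicit Defensive.
Import GRing.Theory.
Local Open Scope ring_scope.

Ltac fld := field; (try (repeat (apply/andP; split); (assumption || exact: oner_neq0))).


Lemma two_neq0 (F : finFieldType) : odd #|F| -> (2%:R : F) != 0.
Proof.
move=> oddF; apply/negP => /eqP h2.
have c2 : (2%N \in [pchar F]) by rewrite inE h2 eqxx.
have := card_pprimeChar c2.
move=> /= E. move: oddF. rewrite [#|F|]E oddX /=.
case: (logn _ _) E => //= E _.
have := finNzRing_gt1 F. by rewrite E.
Qed.

Section S.
Variable F : finFieldType.
Lemma ord4P (j : 'I_4) : j = 0 \/ j = 1 \/ j = 2 \/ j = 3.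
Proof.
case: j => [[|[|[|[|j]]]] Hj]; [left|right;left|right;right;left|right;right;right|by []];
  by apply: val_inj.
Qed.

Lemma rowv4E (x0 x1 x2 x3 : F) i : rowv4 x0 x1 x2 x3 0 i = nth 0 [:: x0; x1; x2; x3] i.
Proof. by rewrite mxE. Qed.

Lemma sum4 (f : 'I_4 -> F) : \sum_(i < 4) f i = f 0 + f 1 + f 2 + f 3.
Proof. by rewrite !big_ord_recr big_ord0 /= add0r; congr (_ + _ + _ + _); congr f; apply: val_inj. Qed.

Lemma rowv4_eq (x0 x1 x2 x3 y0 y1 y2 y3 : F) :
  x0 = y0 -> x1 = y1 -> x2 = y2 -> x3 = y3 -> rowv4 x0 x1 x2 x3 = rowv4 y0 y1 y2 y3.
Proof. by move=> -> -> -> ->. Qed.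

Lemma rowv4_lin a b (x0 x1 x2 x3 y0 y1 y2 y3 : F) :
  a *: rowv4 x0 x1 x2 x3 + b *: rowv4 y0 y1 y2 y3 =
  rowv4 (a * x0 + b * y0) (a * x1 + b * y1) (a * x2 + b * y2) (a * x3 + b * y3).
Proof.
by apply/rowP => i; rewrite !mxE; case: (ord4P i) => [->|[->|[->|->]]].
Qed.

Lemma rowv4_scale a (x0 x1 x2 x3 : F) :
  a *: rowv4 x0 x1 x2 x3 = rowv4 (a * x0) (a * x1) (a * x2) (a * x3).
Proof.
by apply/rowP => i; rewrite !mxE; case: (ord4P i) => [->|[->|[->|->]]].
Qed.

Lemma rowv4_inj (x0 x1 x2 x3 y0 y1 y2 y3 : F) :
  rowv4 x0 x1 x2 x3 = rowv4 y0 y1 y2 y3 -> [/\ x0 = y0, x1 = y1, x2 = y2 & x3 = y3].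
Proof.
move=> E.
have h : forall i : 'I_4, rowv4 x0 x1 x2 x3 0 i = rowv4 y0 y1 y2 y3 0 i by move=> i; rewrite E.
by move: (h 0) (h 1) (h 2) (h 3); rewrite !mxE.
Qed.

Lemma rowv4_mul (z0 z1 z2 z3 : F) (M : 'M[F]_4) :
  rowv4 z0 z1 z2 z3 *m M =
  rowv4 (z0 * M 0 0 + z1 * M 1 0 + z2 * M 2 0 + z3 * M 3 0)
        (z0 * M 0 1 + z1 * M 1 1 + z2 * M 2 1 + z3 * M 3 1)
        (z0 * M 0 2 + z1 * M 1 2 + z2 * M 2 2 + z3 * M 3 2)
        (z0 * M 0 3 + z1 * M 1 3 + z2 * M 2 3 + z3 * M 3 3).
Proof.
apply/rowP => j; rewrite !mxE sum4 !mxE /=.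
by case: (ord4P j) => [->|[->|[->|->]]].
Qed.

Lemma rowv4_dot (z0 z1 z2 z3 c0 c1 c2 c3 : F) :
  rowv4 z0 z1 z2 z3 *m (rowv4 c0 c1 c2 c3)^T = (z0 * c0 + z1 * c1 + z2 * c2 + z3 * c3)%:M.
Proof.
apply/matrixP => i j; rewrite !ord1 !mxE sum4 !mxE /=. by rewrite mulr1n.
Qed.

Lemma Mq_mul (a b c d a' b' c' d' : F) :
  Mq a b c d *m Mq a' b' c' d' =
  Mq (a * a' + c * b') (b * a' + d * b') (a * c' + c * d') (b * c' + d * d').
Proof.
apply/matrixP => i j; rewrite !mxE sum4 !mxE /=.
by case: (ord4P i) => [->|[->|[->|->]]]; case: (ord4P j) => [->|[->|[->|->]]]; rewrite /=; ring.
Qed.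

End S.


Section S2.
Variable F : finFieldType.

Lemma memcol (w u v : 'rV[F]_4) :
  (w <= col_mx u v)%MS <-> exists a b, w = a *: u + b *: v.
Proof.
rewrite -(addsmxE u v); split.
  case/sub_addsmxP => [[p1 p2]] /= ->.
  exists (p1 0 0), (p2 0 0).
  by rewrite {1}(mx11_scalar p1) {1}(mx11_scalar p2) !mul_scalar_mx.
case=> a [b ->]; apply/sub_addsmxP; exists (a%:M, b%:M) => /=.
by rewrite !mul_scalar_mx.
Qed.

Definition e3 : 'rV[F]_4 := rowv4 0 0 0 1.
Definition vv (x y : F) : 'rV[F]_4 := rowv4 1 x y 0.
Definition AA (x y : F) : 'M[F]_(1 + 1, 4) := col_mx e3 (vv x y).

Lemma rowv4_eta (w : 'rV[F]_4) : w = rowv4 (w 0 0) (w 0 1) (w 0 2) (w 0 3).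
Proof. by apply/rowP => j; rewrite mxE; case: (ord4P j) => [->|[->|[->|->]]]. Qed.

Lemma memA (w : 'rV[F]_4) x y :
  (w <= AA x y)%MS = (w 0 1 == x * w 0 0) && (w 0 2 == y * w 0 0).
Proof.
apply/idP/idP.
  move/memcol => [a [b ->]]; rewrite /e3 /vv rowv4_lin !mxE /=.
  by apply/andP; split; apply/eqP; ring.
case/andP => /eqP h1 /eqP h2; apply/memcol; exists (w 0 3), (w 0 0).
rewrite /e3 /vv rowv4_lin {1}(rowv4_eta w) h1 h2.
by apply: rowv4_eq; ring.
Qed.

End S2.


Section S3.
Variable F : finFieldType.

Lemma rank_AA (x y : F) : \rank (AA x y) = 2%N.
Proof.
have nz3 : (e3 F) != 0.
  apply/eqP => /rowP /(_ 3); rewrite !mxE /= => /eqP; by rewrite oner_eq0.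
have nzv : vv x y != 0.
  apply/eqP => /rowP /(_ 0); rewrite !mxE /= => /eqP; by rewrite oner_eq0.
have ncap : \rank (e3 F :&: vv x y)%MS = 0%N.
  apply/eqP; rewrite -leqn0 leqNgt; apply/negP => H.
  have sub := capmxSl (e3 F) (vv x y).
  have r1 : \rank (e3 F :&: vv x y)%MS = 1%N.
    apply/eqP; rewrite eqn_leq H andbT; apply: leq_trans (mxrankS sub) _.
    by rewrite rank_rV nz3.
  have E : (e3 F :&: vv x y == e3 F)%MS.
    by rewrite -(mxrank_leqif_eq sub).2 r1 rank_rV nz3.
  have : (e3 F <= vv x y)%MS.
    apply: submx_trans (capmxSr (e3 F) (vv x y)).
    by move/eqmxP: E => ->.
  case/sub_rVP => a /rowP h.
  move: (h 0) (h 3); rewrite !mxE /= mulr1 mulr0 => _.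
  by move/eqP; rewrite oner_eq0.
have := mxrank_sum_cap (e3 F) (vv x y).
by rewrite ncap addn0 !rank_rV nz3 nzv /AA addsmxE.
Qed.

End S3.


Section S4.
Variable F : finFieldType.

Lemma Mq1 : Mq 1 0 0 1 = 1%:M :> 'M[F]_4.
Proof.
apply/matrixP => i j; rewrite !mxE /=.
by case: (ord4P i) => [->|[->|[->|->]]]; case: (ord4P j) => [->|[->|[->|->]]]; rewrite /=; ring.
Qed.

Definition Nm (t : option F) : 'M[F]_4 := if t is Some s then Mq 1 s 0 1 else Mq 0 1 1 0.
Definition Ni (t : option F) : 'M[F]_4 := if t is Some s then Mq 1 (- s) 0 1 else Mq 0 1 1 0.

Lemma NmK t : Nm t *m Ni t = 1%:M.
Proof. by rewrite -Mq1; case: t => [s|] /=; rewrite Mq_mul; congr Mq; ring. Qed.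
Lemma NiK t : Ni t *m Nm t = 1%:M.
Proof. by rewrite -Mq1; case: t => [s|] /=; rewrite Mq_mul; congr Mq; ring. Qed.
Lemma Nm_free t : row_free (Nm t).
Proof. by rewrite row_free_unit; case: (mulmx1_unit (NmK t)). Qed.
Lemma Ni_free t : row_free (Ni t).
Proof. by rewrite row_free_unit; case: (mulmx1_unit (NiK t)). Qed.

Lemma Mq_free (a b c d : F) : a * d - b * c != 0 -> row_free (Mq a b c d).
Proof.
move=> hD; rewrite row_free_unit.
suff: Mq a b c d *m Mq (d / (a * d - b * c)) (- b / (a * d - b * c))
         (- c / (a * d - b * c)) (a / (a * d - b * c)) = 1%:M by case/mulmx1_unit.
by rewrite Mq_mul -Mq1; congr Mq; field.
Qed.

Lemma transport m (A : 'M[F]_(m, 4)) (w : 'rV[F]_4) t :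
  (w <= A *m Nm t)%MS = (w *m Ni t <= A)%MS.
Proof.
by rewrite -(submxMfree _ _ (Ni_free t)) -mulmxA NmK mulmx1.
Qed.

Definition cv (t : option F) : 'rV[F]_4 :=
  if t is Some s then rowv4 (s ^+ 3) (s ^+ 2) s 1 else rowv4 1 0 0 0.
Definition cpt t : 'M[F]_4 := <<cv t>>%MS.
Definition oscv (t : option F) : 'rV[F]_4 := if t is Some s then osc s else osc_inf F.

Lemma cubic_ptsP P : reflect (exists t, P = cpt t) (P \in cubic_pts F).
Proof.
rewrite /cubic_pts inE; apply: (iffP orP).
  case=> [/imsetP [s _ ->]|]; first by exists (Some s).
  by rewrite inE => /eqP ->; exists None.
case=> [[s|] ->]; [left; apply/imsetP; by exists s | right; by rewrite inE].
Qed.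

Lemma cpt_in t : cpt t \in cubic_pts F.
Proof. by apply/cubic_ptsP; exists t. Qed.

Lemma e3Nm t : e3 F *m Nm t = cv t.
Proof. by case: t => [s|]; rewrite /e3 rowv4_mul !mxE /=; apply: rowv4_eq; ring. Qed.

Lemma cvNi t : cv t *m Ni t = e3 F.
Proof. by case: t => [s|]; rewrite /e3 rowv4_mul !mxE /=; apply: rowv4_eq; ring. Qed.

Lemma Ni_e0 t : Ni t *m (rowv4 1 0 0 0)^T = (oscv t)^T.
Proof.
apply/matrixP => i j; rewrite !ord1 !mxE sum4 !mxE /=.
by case: t => [s|]; case: (ord4P i) => [->|[->|[->|->]]]; rewrite /= !mxE /=; ring.
Qed.

Lemma Nm_osc t : Nm t *m (oscv t)^T = (rowv4 1 0 0 0)^T.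
Proof. by rewrite -Ni_e0 mulmxA NmK mul1mx. Qed.

Lemma sc1_neq0 (a : F) : a != 0 -> (a%:M : 'M_1) != 0.
Proof. move=> ha; apply/eqP => /matrixP /(_ 0 0); rewrite !mxE /= mulr1n => h. by rewrite h eqxx in ha. Qed.

Lemma notin_plane (L : 'M[F]_4) (r c : 'rV[F]_4) :
  (r <= L)%MS -> r *m c^T != 0 -> ~~ in_plane L c.
Proof.
move=> /submxP [D ->] h; apply/negP; rewrite /in_plane => /eqP E.
by move: h; rewrite -mulmxA E mulmx0 eqxx.
Qed.

Lemma cpt_inj t t' : cpt t = cpt t' -> t = t'.
Proof.
move=> E; have : (cv t <= cv t')%MS by rewrite -genmxE /cpt in E *; rewrite E genmxE.
case/sub_rVP => k /rowP h.
case: t t' E h => [s|] [s'|] E h //.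
- move: (h 3) (h 2); rewrite !mxE /= mulr1 => <-; by rewrite mul1r => ->.
- by move: (h 3); rewrite !mxE /= mulr0 => /eqP; rewrite oner_eq0.
- move: (h 3) (h 0); rewrite !mxE /= mulr1 => <-; rewrite mul0r => /eqP.
  by rewrite oner_eq0.
Qed.

End S4.


Section S5.
Variable F : finFieldType.

Definition Lpar (t : option F) (x y : F) : 'M[F]_4 := <<AA x y *m Nm t>>%MS.

Lemma cvNi_SS (s s' : F) : cv (Some s') *m Ni (Some s) = cv (Some (s' - s)).
Proof. by rewrite /= rowv4_mul !mxE /=; apply: rowv4_eq; ring. Qed.
Lemma cvNi_NS (s : F) : cv None *m Ni (Some s) = cv None.
Proof. by rewrite /= rowv4_mul !mxE /=; apply: rowv4_eq; ring. Qed.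
Lemma cvNi_SN (s' : F) : cv (Some s') *m Ni None = rowv4 1 s' (s' ^+ 2) (s' ^+ 3).
Proof. by rewrite /= rowv4_mul !mxE /=; apply: rowv4_eq; ring. Qed.

Lemma cpt_le_Lpar t' t (x y : F) : y != x ^+ 2 ->
  (cpt t' <= Lpar t x y)%MS = (t' == t).
Proof.
move=> hy; rewrite /cpt /Lpar !genmxE transport.
case: t => [s|]; case: t' => [s'|].
- rewrite cvNi_SS memA /= !mxE /=.
  case: (eqVneq s' s) => [->|ne].
    by rewrite subrr !expr0n /= !mulr0 !eqxx.
  rewrite (inj_eq (@Some_inj _)) (negbTE ne).
  have nz : s' - s != 0 by rewrite subr_eq0.
  apply/negbTE/negP => /andP [/eqP h1 /eqP h2].
  apply: (negP hy); apply/eqP.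
  have -> : y = x ^+ 2 + ((s' - s) - y * (s' - s) ^+ 3) / (s' - s) ^+ 3 * (-1)
      + ((s' - s) ^+ 2 - x * (s' - s) ^+ 3) * (x * (s' - s) + 1) / (s' - s) ^+ 4 by field.
  by rewrite -h1 -h2 !subrr !mul0r ?mulr0 !addr0.
- rewrite cvNi_NS memA /= !mxE /= !mulr1.
  apply/negbTE/negP => /andP [/eqP h1 /eqP h2].
  by apply: (negP hy); rewrite -h1 -h2 expr0n.
- rewrite cvNi_SN memA /= !mxE /= !mulr1.
  apply/negbTE/negP => /andP [/eqP h1 /eqP h2].
  by apply: (negP hy); rewrite -h1 -h2.
- by rewrite cvNi memA /e3 !mxE /= !mulr0 !eqxx.
Qed.

Lemma Lpar_cubic t (x y : F) : y != x ^+ 2 ->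
  [set P in cubic_pts F | (P <= Lpar t x y)%MS] = [set cpt t].
Proof.
move=> hy; apply/setP => P; rewrite inE [in RHS]inE.
apply/andP/eqP.
  move=> [/cubic_ptsP [t' ->]]; rewrite cpt_le_Lpar // => /eqP -> //.
by move=> ->; rewrite cpt_in cpt_le_Lpar // eqxx.
Qed.

Lemma Lpar_line t (x y : F) : is_line (Lpar t x y).
Proof.
rewrite /is_line /Lpar genmx_id eqxx andbT mxrank_gen mxrankMfree ?Nm_free //.
by rewrite rank_AA.
Qed.

Lemma Lpar_osc t' t (x y : F) : ~~ in_plane (Lpar t x y) (oscv t').
Proof.
case: (eqVneq t' t) => [->|ne].
  apply: (notin_plane (r := vv x y *m Nm t)).
    rewrite /Lpar genmxE; apply: submxMr.
    by rewrite /AA -addsmxE addsmxSr.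
  rewrite -mulmxA Nm_osc /vv rowv4_dot.
  apply: sc1_neq0; rewrite mulr1 !mulr0 !addr0 oner_eq0 //.
apply: (notin_plane (r := cv t)).
  rewrite /Lpar genmxE -e3Nm; apply: submxMr.
  by rewrite /AA -addsmxE addsmxSl.
case: t t' ne => [s|] [s'|] ne /=; rewrite /osc /osc_inf rowv4_dot; apply: sc1_neq0.
- have -> : s ^+ 3 * 1 + s ^+ 2 * - (3%:R * s') + s * (3%:R * s' ^+ 2) + 1 * - s' ^+ 3
     = (s - s') ^+ 3 by ring.
  rewrite expf_neq0 // subr_eq0; apply: contra ne => /eqP -> //.
- by rewrite !mulr0 !mulr1 ?add0r ?addr0 oner_eq0.
- by rewrite !mulr1 !mul0r ?add0r ?addr0 oner_eq0.
- by rewrite eqxx in ne.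
Qed.

Lemma Lpar_UnGamma t (x y : F) : y != x ^+ 2 -> Lpar t x y \in UnGamma F.
Proof.
move=> hy; rewrite inE Lpar_line Lpar_cubic // cards1 eqxx /=.
apply/andP; split; last exact: (Lpar_osc None).
by apply/forallP => s; exact: (Lpar_osc (Some s)).
Qed.

End S5.


Section S6.
Variable F : finFieldType.

Lemma sc1_0 : (0%:M : 'M[F]_1) = 0.
Proof. by apply/matrixP => a b; rewrite !mxE mul0rn. Qed.

Lemma UnGamma_Lpar (L : 'M[F]_4) : L \in UnGamma F ->
  exists t x y, y != x ^+ 2 /\ L = Lpar t x y.
Proof.
rewrite inE => /and4P [hline hcard hosc hinf].
move/cards1P: hcard => [P hP].
have : P \in [set P in cubic_pts F | (P <= L)%MS] by rewrite hP set11.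
rewrite inE => /andP [/cubic_ptsP [t ePt] hPL]; subst P.
have hosct : ~~ in_plane L (oscv t).
  by case: t hP hPL => [s|] _ _ /=; [exact: (forallP hosc s) | exact: hinf].
case/andP: hline => /eqP hrk /eqP hgen.
have cvL : (cv t <= L)%MS by move: hPL; rewrite /cpt genmxE.
set B := L *m Ni t.
have e3B : (e3 F <= B)%MS by rewrite -(cvNi t) submxMr.
have hB0 : B *m (rowv4 1 0 0 0)^T != 0 by rewrite /B -mulmxA Ni_e0.
have : ~~ [forall i, row i B *m (rowv4 1 0 0 0)^T == 0].
  apply: contra hB0 => /forallP h; apply/eqP/row_matrixP => i.
  by rewrite row_mul row0; exact/eqP/h.
move/forallPn => [i hi].
set w := row i B.
have wB : (w <= B)%MS := row_sub i B.
have w0 : w 0 0 != 0.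
  apply/negP => /eqP h; move: hi; rewrite -/w (rowv4_eta w) rowv4_dot h.
  by rewrite !mulr0 !mul0r !addr0 sc1_0 eqxx.
set x := w 0 1 / w 0 0.
set y := w 0 2 / w 0 0.
have vB : (vv x y <= B)%MS.
  have -> : vv x y = (w 0 0)^-1 *: w + (- (w 0 3 / w 0 0)) *: e3 F.
    rewrite {2}(rowv4_eta w) /e3 /vv rowv4_lin /x /y; apply: rowv4_eq; (field; try exact: w0).
  by apply: addmx_sub; apply: scalemx_sub.
have AB : (AA x y <= B)%MS by rewrite /AA col_mx_sub e3B vB.
have rB : \rank B = 2%N by rewrite /B mxrankMfree ?Ni_free // hrk.
have eAB : (AA x y == B)%MS by rewrite -(mxrank_leqif_eq AB).2 rB rank_AA.
have BA : (B <= AA x y)%MS by case/andP: eAB.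
have hy : y != x ^+ 2.
  apply/negP => /eqP hyx.
  pose t' := match t with Some s => if x == 0 then None else Some (s + x^-1) | None => Some x end.
  have ne : t' != t.
    rewrite /t'; destruct t as [s|] => //.
    case: ifP => // /negbT hx; rewrite (inj_eq (@Some_inj _)) -subr_eq0 addrC addKr.
    by rewrite invr_eq0.
  have : (cv t' <= L)%MS.
    rewrite -(submxMfree _ _ (Ni_free t)) -/B; apply: (submx_trans _ AB).
    rewrite /t'; destruct t as [s|].
      case: ifP => [/eqP hx0|/negbT hx].
        by rewrite cvNi_NS memA /= !mxE /= !mulr1 hyx hx0 expr0n !eqxx.
      rewrite cvNi_SS memA /= !mxE /= hyx.
      have -> : s + x^-1 - s = x^-1 by ring.
      by apply/andP; split; apply/eqP; field.
    by rewrite cvNi_SN memA !mxE /= !mulr1 hyx !eqxx.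
  move=> h.
  have : cpt t' \in [set P in cubic_pts F | (P <= L)%MS] by rewrite inE cpt_in /cpt genmxE h.
  by rewrite hP inE => /eqP /cpt_inj /eqP; rewrite (negbTE ne).
exists t, x, y; split => //.
rewrite -hgen /Lpar; apply/genmxP; apply/andP; split.
  by rewrite -(submxMfree _ _ (Ni_free t)) -mulmxA NmK mulmx1.
by rewrite -(submxMfree _ _ (Ni_free t)) -mulmxA NmK mulmx1.
Qed.

Lemma Lpar_inj t (x y : F) t' x' y' : y != x ^+ 2 -> y' != x' ^+ 2 ->
  Lpar t x y = Lpar t' x' y' -> [/\ t = t', x = x' & y = y'].
Proof.
move=> hy hy' E.
have h1 : (cpt t <= Lpar t' x' y')%MS by rewrite -E cpt_le_Lpar // eqxx.
rewrite cpt_le_Lpar // in h1; move/eqP: h1 => h1; subst t'.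
have h2 : (vv x y *m Nm t <= Lpar t x' y')%MS.
  by rewrite -E /Lpar genmxE submxMr // /AA -addsmxE addsmxSr.
rewrite /Lpar genmxE transport -mulmxA NmK mulmx1 memA /vv !mxE /= !mulr1 in h2.
by case/andP: h2 => /eqP <- /eqP <-.
Qed.

End S6.




Section S7.
Variable F : finFieldType.

Lemma L4core (r a c d : F) : a != 0 -> d != 0 ->
  (AA 0 r *m Mq a 0 c d == AA (c / a) ((c ^+ 2 + r * d ^+ 2) / a ^+ 2))%MS.
Proof.
move=> an dn.
have sub : (AA 0 r *m Mq a 0 c d <= AA (c / a) ((c ^+ 2 + r * d ^+ 2) / a ^+ 2))%MS.
  rewrite /AA mul_col_mx col_mx_sub /e3 /vv !rowv4_mul !memA !mxE /=.
  by apply/andP; split; apply/andP; split; apply/eqP; fld.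
rewrite -(mxrank_leqif_eq sub).2 mxrankMfree ?rank_AA //.
by apply: Mq_free; rewrite mul0r subr0 mulf_neq0.
Qed.

Definition lr (r : F) : 'M[F]_4 := line_through (rowv4 0 0 0 1) (rowv4 1 0 r 0).

Lemma proj_lr (M : 'M[F]_4) r : proj_of M (lr r) = <<AA 0 r *m M>>%MS.
Proof. by rewrite ffunE; apply/genmxP/eqmxP/eqmxMr/genmxE. Qed.

Lemma L4a (r a b c d : F) : a * d - b * c != 0 -> d != 0 ->
  proj_of (Mq a b c d) (lr r) =
  Lpar (Some (b / d)) (c * d / (a * d - b * c))
       ((c ^+ 2 + r * d ^+ 2) * d ^+ 2 / (a * d - b * c) ^+ 2).
Proof.
move=> hD dn; rewrite proj_lr.
have -> : Mq a b c d = Mq ((a * d - b * c) / d) 0 c d *m Nm (Some (b / d)).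
  by rewrite /= Mq_mul; congr Mq; fld.
rewrite mulmxA /Lpar; apply/genmxP/eqmxP/eqmxMr/eqmxP.
  have -> : c * d / (a * d - b * c) = c / ((a * d - b * c) / d) by fld.
have -> : (c ^+ 2 + r * d ^+ 2) * d ^+ 2 / (a * d - b * c) ^+ 2
        = (c ^+ 2 + r * d ^+ 2) / ((a * d - b * c) / d) ^+ 2 by fld.
by apply: L4core => //; rewrite mulf_neq0 ?invr_eq0.
Qed.

Lemma L4b (r a b c : F) : b != 0 -> c != 0 ->
  proj_of (Mq a b c 0) (lr r) = Lpar None (a / c) ((a ^+ 2 + r * b ^+ 2) / c ^+ 2).
Proof.
move=> bn cn; rewrite proj_lr.
have -> : Mq a b c 0 = Mq c 0 a b *m Nm None by rewrite /Nm Mq_mul; congr Mq; ring.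
rewrite mulmxA /Lpar; apply/genmxP/eqmxP/eqmxMr/eqmxP.
exact: L4core.
Qed.

Lemma GqP (phi : {ffun 'M[F]_4 -> 'M[F]_4}) :
  reflect (exists a b c d, a * d - b * c != 0 /\ phi = proj_of (Mq a b c d)) (phi \in Gq F).
Proof.
rewrite inE; apply: (iffP existsP).
  by case=> a /existsP [b /existsP [c /existsP [d /andP [h /eqP ->]]]]; exists a, b, c, d.
case=> a [b [c [d [h ->]]]]; exists a; apply/existsP; exists b; apply/existsP; exists c.
by apply/existsP; exists d; rewrite h eqxx.
Qed.

Definition Sr (r : F) : {set option F * (F * F)} :=
  [set u | [exists s, (s != 0) && (u.2.2 - u.2.1 ^+ 2 == r * s ^+ 2)]].
Definition Lp (u : option F * (F * F)) := Lpar u.1 u.2.1 u.2.2.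

Lemma neq_sq (r s x y : F) : r != 0 -> s != 0 -> y - x ^+ 2 = r * s ^+ 2 -> y != x ^+ 2.
Proof. by move=> rn sn h; rewrite -subr_eq0 h mulf_neq0 ?expf_neq0. Qed.

Lemma Sr_neq (r : F) u : r != 0 -> u \in Sr r -> u.2.2 != u.2.1 ^+ 2.
Proof. by move=> rn; rewrite inE => /existsP [s /andP [sn /eqP h]]; apply: neq_sq h. Qed.

Lemma orbit_lr (r : F) : r != 0 -> Gorbit (lr r) = Lp @: Sr r.
Proof.
move=> rn; apply/setP => L; apply/imsetP/imsetP.
  case=> phi /GqP [a [b [c [d [hD ->]]]]] ->.
  case: (eqVneq d 0) => [d0|dn].
    subst d.
    have : b * c != 0 by rewrite mulr0 sub0r oppr_eq0 in hD.
    rewrite mulf_eq0 negb_or => /andP [bn cn].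
    exists (None, (a / c, (a ^+ 2 + r * b ^+ 2) / c ^+ 2)); last by rewrite L4b.
    rewrite inE; apply/existsP; exists (b / c); rewrite mulf_neq0 ?invr_eq0 //=.
    by apply/eqP; fld.
  exists (Some (b / d), (c * d / (a * d - b * c),
          (c ^+ 2 + r * d ^+ 2) * d ^+ 2 / (a * d - b * c) ^+ 2)); last by rewrite L4a.
  rewrite inE; apply/existsP; exists (d ^+ 2 / (a * d - b * c)).
  rewrite mulf_neq0 ?invr_eq0 ?expf_neq0 //=.
  by apply/eqP; fld.
case=> [[t [x y]]] hS ->.
rewrite inE /= in hS; case/existsP: hS => s /andP [sn /eqP hs].
have ey : y = x ^+ 2 + r * s ^+ 2 by rewrite -hs; ring.
case: t => [t0|].
  exists (proj_of (Mq (1 + x * t0) (s * t0) x s)).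
    apply/GqP; exists (1 + x * t0), (s * t0), x, s; split => //.
    by have -> : (1 + x * t0) * s - s * t0 * x = s by ring.
  have eD : (1 + x * t0) * s - s * t0 * x = s by ring.
  rewrite L4a ?eD // /Lp /= ey; congr Lpar; try congr Some; fld.
exists (proj_of (Mq x s 1 0)).
  apply/GqP; exists x, s, 1, 0; split => //.
  by rewrite mulr0 sub0r mulr1 oppr_eq0.
rewrite L4b ?oner_eq0 // /Lp /= ey; congr Lpar; fld.
Qed.

Lemma lr_Lpar (r : F) : lr r = Lpar (Some 0) 0 r.
Proof. by rewrite /Lpar /Nm Mq1 mulmx1. Qed.

Lemma Mq_diag (a e : F) : Mq a 0 0 (e * a) = a ^+ 3 *: diagd e.
Proof.
apply/matrixP => i j; rewrite !mxE.
by case: (ord4P i) => [->|[->|[->|->]]]; case: (ord4P j) => [->|[->|[->|->]]]; rewrite /=; ring.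
Qed.

Lemma proj_of_scale (k : F) M : k != 0 -> proj_of (k *: M) = proj_of M.
Proof.
move=> kn; apply/ffunP => X; rewrite !ffunE; apply/genmxP.
by rewrite -scalemxAr; apply/eqmxP/eqmx_scale.
Qed.

End S7.



Section S8.
Variable F : finFieldType.

Lemma diagd_Mq (e : F) : diagd e = Mq 1 0 0 e.
Proof. by rewrite -[e in RHS]mulr1 Mq_diag expr1n scale1r. Qed.

Lemma diag_fix (r e : F) : e ^+ 2 = 1 -> proj_of (diagd e) (lr r) = lr r.
Proof.
move=> e2.
have en : e != 0 by apply/eqP => e0; move: e2; rewrite e0 expr0n /= => /eqP; rewrite eq_sym oner_eq0.
rewrite diagd_Mq L4a ?mul1r ?mul0r ?subr0 // lr_Lpar.
have -> : (0 ^+ 2 + r * e ^+ 2) * e ^+ 2 / e ^+ 2 = r by rewrite e2; fld.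
by congr Lpar; try congr Some; fld.
Qed.

Lemma diag_Gq (e : F) : e != 0 -> proj_of (diagd e) \in Gq F.
Proof.
move=> en; apply/GqP; exists 1, 0, 0, e; split; last by rewrite diagd_Mq.
by rewrite mul1r mul0r subr0.
Qed.

Lemma stab_lr (r : F) : r != 0 ->
  Gstab (lr r) = [set proj_of (diagd 1); proj_of (diagd (-1))].
Proof.
move=> rn; apply/setP => phi; rewrite inE in_set2; apply/andP/orP.
  case=> /GqP [a [b [c [d [hD ->]]]]] /eqP hfix.
  have r0 : r != 0 ^+ 2 by rewrite expr0n.
  case: (eqVneq d 0) => [d0|dn].
    subst d.
    have : b * c != 0 by rewrite mulr0 sub0r oppr_eq0 in hD.
    rewrite mulf_eq0 negb_or => /andP [bn cn].
    rewrite L4b // lr_Lpar in hfix.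
    have hy : (a ^+ 2 + r * b ^+ 2) / c ^+ 2 != (a / c) ^+ 2.
      apply: (neq_sq rn (s := b / c)); first by rewrite mulf_neq0 ?invr_eq0.
      by fld.
    by case: (Lpar_inj hy r0 hfix).
  rewrite L4a // lr_Lpar in hfix.
  have hy : (c ^+ 2 + r * d ^+ 2) * d ^+ 2 / (a * d - b * c) ^+ 2
            != (c * d / (a * d - b * c)) ^+ 2.
    apply: (neq_sq rn (s := d ^+ 2 / (a * d - b * c))).
      by rewrite mulf_neq0 ?invr_eq0 ?expf_neq0.
    by fld.
  case: (Lpar_inj hy r0 hfix) => [[hb] hc hr].
  have b0 : b = 0.
    by move/eqP: hb; rewrite mulf_eq0 invr_eq0 (negbTE dn) orbF => /eqP.
  subst b.
  have c0 : c = 0.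
    move/eqP: hc; rewrite mulf_eq0 invr_eq0 (negbTE hD) orbF mulf_eq0 (negbTE dn) orbF.
    by move/eqP.
  subst c.
  have an : a != 0 by move: hD; rewrite mul0r subr0 mulf_eq0 negb_or => /andP [].
  have key : (0 ^+ 2 + r * d ^+ 2) * d ^+ 2 / (a * d - 0 * 0) ^+ 2 - r
           = r * (d - a) * (d + a) / a ^+ 2 by fld.
  move: key; rewrite hr subrr => /esym /eqP.
  rewrite !mulf_eq0 invr_eq0 expf_eq0 (negbTE rn) (negbTE an) andbF orbF /=.
  case/orP => [/eqP da|/eqP da].
    left; apply/eqP.
    have -> : d = 1 * a by rewrite mul1r; apply/eqP; rewrite -subr_eq0 da.
    by rewrite Mq_diag proj_of_scale // expf_neq0.
  right; apply/eqP.
  have -> : d = -1 * a by rewrite mulN1r; apply/eqP; rewrite -subr_eq0 opprK da.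
  by rewrite Mq_diag proj_of_scale // expf_neq0.
case=> /eqP ->; (split; [apply: diag_Gq | apply/eqP; apply: diag_fix]).
- exact: oner_neq0.
- by rewrite expr1n.
- by rewrite oppr_eq0 oner_neq0.
- by rewrite sqrrN expr1n.
Qed.

End S8.


Section S9.
Variable F : finFieldType.

Definition Qr (r : F) : {set F} := [set z | [exists s, (s != 0) && (z == r * s ^+ 2)]].
Definition nz : {set F} := [set s : F | s != 0].

Lemma card_nz : #|nz| = #|F|.-1.
Proof.
rewrite -(cardsC1 (0 : F)); apply: eq_card => s; by rewrite !inE.
Qed.

Lemma Q1E : Qr 1 = (fun s : F => s ^+ 2) @: nz.
Proof.
apply/setP => z; rewrite inE; apply/existsP/imsetP.
  by case=> s /andP [sn /eqP ->]; exists s; rewrite ?inE ?mul1r.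
by case=> s; rewrite inE => sn ->; exists s; rewrite sn mul1r eqxx.
Qed.

Lemma card_Q1 : odd #|F| -> (#|Qr 1%R| * 2)%N = #|F|.-1.
Proof.
move=> oddF; have h2 := two_neq0 oddF.
have -> : #|F|.-1 = (\sum_(i in nz) 1)%N by rewrite sum1_card card_nz.
rewrite (partition_big_imset (fun s : F => s ^+ 2)) /= Q1E.
rewrite -sum_nat_const; apply: eq_bigr => z /imsetP [s0]; rewrite inE => s0n ->.
rewrite sum1_card.
have -> : #|[pred i in nz | i ^+ 2 == s0 ^+ 2]| = #|[set s0; - s0]|.
  apply: eq_card => i; rewrite !inE eqf_sqr.
  case: (eqVneq i 0) => [->|//]; rewrite eq_sym (negbTE s0n) /= eq_sym oppr_eq0.
  by rewrite (negbTE s0n).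
rewrite cards2.
suff -> : (s0 != - s0) = true by [].
apply/negP => /eqP h; apply: (negP h2); apply/eqP.
have : s0 * 2%:R = 0 by rewrite mulr_natr mulr2n {1}h addNr.
by move/eqP; rewrite mulf_eq0 (negbTE s0n) /= => /eqP.
Qed.

Lemma card_Qr (r : F) : r != 0 -> #|Qr r| = #|Qr 1|.
Proof.
move=> rn; rewrite -[RHS](card_imset _ (mulfI rn)); apply: eq_card => z.
apply/idP/imsetP.
  rewrite inE => /existsP [s /andP [sn /eqP ->]].
  by exists (s ^+ 2) => //; rewrite inE; apply/existsP; exists s; rewrite sn mul1r eqxx.
case=> w; rewrite inE => /existsP [s /andP [sn /eqP ->]] ->.
by rewrite inE; apply/existsP; exists s; rewrite sn mul1r eqxx.
Qed.

Lemma dichotomy (rho : F) : odd #|F| -> ~ (exists x : F, x ^+ 2 = rho) ->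
  forall z : F, z != 0 -> z \in Qr 1 \/ z \in Qr rho.
Proof.
move=> oddF hrho z zn.
have rn : rho != 0 by apply/eqP => r0; apply: hrho; exists 0; rewrite r0 expr0n.
case hz : (z \in Qr 1); [by left | right].
have sub1 : Qr 1 \subset nz.
  apply/subsetP => w; rewrite !inE => /existsP [s /andP [sn /eqP ->]].
  by rewrite mul1r expf_neq0.
have subr : Qr rho \subset nz :\: Qr 1.
  apply/subsetP => w; rewrite !inE => /existsP [s /andP [sn /eqP ->]].
  rewrite mulf_neq0 ?expf_neq0 // andbT; apply/negP => /existsP [u /andP [un /eqP hu]].
  apply: hrho; exists (u / s); move: hu; rewrite mul1r => hu; rewrite expr_div_n -hu; field.
  done.
have cD : #|nz :\: Qr 1| = #|Qr rho|.
  rewrite cardsD (setIidPr sub1) card_nz card_Qr // -(card_Q1 oddF); lia.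
have : Qr rho == nz :\: Qr 1 by rewrite eqEcard subr cD leqnn.
by move/eqP ->; rewrite in_setD hz /= inE zn.
Qed.

Lemma card_Sr (r : F) : r != 0 ->
  #|Sr r| = (#|F|.+1 * (#|F| * #|Qr r|))%N.
Proof.
move=> rn.
pose g := fun u : option F * (F * F) => (u.1, (u.2.1, u.2.2 - u.2.1 ^+ 2)).
have ginj : injective g.
  move=> [t [x y]] [t' [x' y']] [-> -> h]; congr (_, (_, _)).
  by move/(congr1 (fun v => v + x' ^+ 2)): h; rewrite !subrK.
have -> : Sr r = g @^-1: (setX [set: option F] (setX [set: F] (Qr r))).
  by apply/setP => u; rewrite !inE.
by rewrite card_preimset // !cardsX !cardsT card_option.
Qed.

End S9.


Lemma arith (q k : nat) : (0 < q)%N -> (k * 2)%N = q.-1 ->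
  (q.+1 * (q * k))%N = ((q ^ 3 - q) %/ 2)%N.
Proof.
move=> q0 hk.
have eq : q = (k * 2).+1 by lia.
have -> : (q ^ 3 - q)%N = (q.+1 * (q * k) * 2)%N.
  rewrite eq !expnS expn0 muln1; nia.
by rewrite mulnK.
Qed.

Lemma diag_neq (F : finFieldType) : (2%:R : F) != 0 ->
  proj_of (diagd (1 : F)) != proj_of (diagd (-1)).
Proof.
move=> h2; apply/eqP => E.
have := congr1 (fun f : {ffun 'M[F]_4 -> 'M[F]_4} => f (<<rowv4 (1 : F) 1 0 0>>%MS)) E.
rewrite !ffunE => /genmxP /andP [h _].
rewrite !(eqmxMr _ (genmxE _)) !rowv4_mul !mxE /= in h.
case/sub_rVP: h => k /rowP h.
move: (h 0) (h 1); rewrite !mxE /= (_ : (1 %% 4 = 1)%N) // !expr0 !expr1.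
rewrite ?mul1r ?mulr0 ?mul0r ?addr0 ?add0r ?mulr1 ?mulrN1.
move=> <- h1; apply: (negP h2); apply/eqP; by rewrite mulr2n {1}h1 addNr.
Qed.

Theorem theorem6p7 (F : finFieldType) (rho : F) :
  odd #|F| -> (5 <= #|F|)%N ->
  ~ (exists x : F, x ^+ 2 = rho) ->
  let P0 := rowv4 0 0 0 1 in
  let l1 := line_through P0 (rowv4 1 0 1 0) in
  let l2 := line_through P0 (rowv4 1 0 rho 0) in
  UnGamma F = Gorbit l1 :|: Gorbit l2 /\
  [disjoint Gorbit l1 & Gorbit l2] /\
  #|Gorbit l1| = ((#|F| ^ 3 - #|F|) %/ 2)%N /\
  #|Gorbit l2| = ((#|F| ^ 3 - #|F|) %/ 2)%N /\
  Gstab l1 = Gstab l2 /\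
  #|Gstab l1| = 2%N /\
  (forall phi, phi \in Gstab l1 ->
        exists d : F, (d = 1 \/ d = -1) /\ phi = proj_of (diagd d)).
Proof.
move=> oddF _ hrho P0 l1 l2.
have rn : rho != 0 by apply/eqP => r0; apply: hrho; exists 0; rewrite r0 expr0n.
have o1 : (1 : F) != 0 := oner_neq0 _.
have -> : l1 = lr 1 by [].
have -> : l2 = lr rho by [].
rewrite !orbit_lr // !stab_lr //.
have hinj (r : F) : r != 0 -> {in Sr r &, injective (@Lp F)}.
  move=> rn' [t [x y]] [t' [x' y']] hu hv; rewrite /Lp /= => E.
  case: (Lpar_inj (Sr_neq rn' hu) (Sr_neq rn' hv) E) => e1 e2 e3; rewrite /= in e1 e2 e3; by rewrite e1 e2 e3.
have hcard (r : F) : r != 0 -> #|(@Lp F) @: Sr r| = ((#|F| ^ 3 - #|F|) %/ 2)%N.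
  move=> rn'; rewrite card_in_imset; last exact: hinj. rewrite -[LHS]/(#|Sr r|) card_Sr // card_Qr //.
  apply: arith; last exact: card_Q1.
  by apply/card_gt0P; exists 0.
split.
  apply/setP => L; rewrite in_setU; apply/idP/orP.
    move/UnGamma_Lpar => [t [x [y [hy ->]]]].
    have z0 : y - x ^+ 2 != 0 by rewrite subr_eq0.
    case: (dichotomy oddF hrho z0) => hz; [left|right]; apply/imsetP; exists (t, (x, y)) => //;
      rewrite inE; move: hz; rewrite inE => /existsP [s /andP [sn /eqP hs]];
      apply/existsP; exists s; by rewrite sn /= hs eqxx.
  by case=> /imsetP [[t [x y]] hu ->]; rewrite /Lp /=; apply: Lpar_UnGamma; exact: (Sr_neq _ hu).
split.
  rewrite -setI_eq0; apply/eqP/setP => L; rewrite in_setI in_set0.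
  apply/negbTE/negP => /andP [/imsetP [[t [x y]] hu ->] /imsetP [[t' [x' y']] hv E]].
  move: E; rewrite /Lp /= => E.
  case: (Lpar_inj (Sr_neq o1 hu) (Sr_neq rn hv) E) => _ ex ey; rewrite /= in ex ey; subst x' y'.
  move: hu hv; rewrite !inE /= => /existsP [s /andP [sn /eqP hs]] /existsP [s' /andP [sn' /eqP hs']].
  apply: hrho; exists (s / s'); rewrite expr_div_n.
  move: hs'; rewrite hs mul1r => ->; field.
  exact: sn'.
split; first exact: hcard.
split; first exact: hcard.
split; first by [].
split; first by rewrite cards2 diag_neq // two_neq0.
move=> phi; rewrite in_set2 => /orP [/eqP ->|/eqP ->].
  by exists 1; split => //; left.
by exists (-1); split => //; right.
Qed.
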